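(* Let $z^0\in X$, $\gamma\in(0,2)$, $\delta\in[0,1/2)$, and let $\{\sigma_k\},\{\eta_k\}$ be nonnegative with $\sum_k\eta_k<\infty$, $\inf_k\sigma_k>0$; let $z^{k+1}$ be an output of IGPPAstep$(z^k,\sigma_k,\eta_k,\delta,\gamma,M)$ for all $k\ge0$. Assume $T$ satisfies the bounded metric subregularity condition, let $\bar z^0$ be a point of $\Omega$ nearest to $z^0$ in $\|\cdot\|_M$, let $r\ge\|\bar z^0\|+\frac{1}{\lambda_{\min}(M)}(\operatorname{dist}_M(z^0,\Omega)+\gamma\sum_k\eta_k)$ and $\kappa_r>0$ with $\operatorname{dist}(z,\Omega)\le\kappa_r\operatorname{dist}(0,T(z))$ for $\|z\|\le r$. Then for every $k\ge0$, $$\frac{1-\delta}{\gamma}\|z^{k+1}-z^k\|_M\le\operatorname{dist}_M(z^k,\Omega)\le\frac{1+\delta}{\gamma\Big(1-\sqrt{\frac{\kappa_r^2}{\sigma_k^2+\kappa_r^2}}\Big)}\|z^{k+1}-z^k\|_M.$$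
   Context: $X$ is a finite-dimensional real Hilbert space; $T:X\rightrightarrows X$ is maximal monotone with $\Omega:=T^{-1}(0)\neq\emptyset$. $M$ is self-adjoint positive definite with $\lambda_{\max}(M)=1$; $\|z\|_M=\sqrt{\langle z,Mz\rangle}$, $\operatorname{dist}_M(z,D)=\min_{d\in D}\|d-z\|_M$, $\operatorname{dist}=\operatorname{dist}_I$. $\mathcal{J}_{\sigma M^{-1}T}:=(I+\sigma M^{-1}T)^{-1}$. $z^+$ is an output of IGPPAstep$(z,\sigma,\eta,\delta,\gamma,M)$ if $z^+=\gamma w+(1-\gamma)z$ for some $w$ with $\|w-\mathcal{J}_{\sigma M^{-1}T}(z)\|_M\le\min\{\eta,\delta\|w-z\|_M\}$. Bounded metric subregularity: for every $r>0$ there is $\kappa_r>0$ with $\operatorname{dist}(z,\Omega)\le\kappa_r\operatorname{dist}(0,T(z))$ for all $\|z\|\le r$. *)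

(* Defs.v *)
From HB Require Import structures.
From mathcomp Require Import all_boot all_order all_algebra.
From mathcomp Require Import all_classical all_reals.
From mathcomp Require Import topology normedtype sequences.
Set Implicit Arguments. Unset Strict Implicit. Unset Printing Implicit Defensive.
Import Order.TTheory GRing.Theory Num.Theory.
Local Open Scope ring_scope.
Local Open Scope classical_set_scope.

Section Defs.
Variables (R : realType) (n : nat).
Local Notation X := 'cV[R]_n.

Definition dotp (x y : X) : R := (x^T *m y) 0 0.
Definition enorm (x : X) : R := Num.sqrt (dotp x x).
Definition normM (M : 'M[R]_n) (z : X) : R := Num.sqrt (dotp z (M *m z)).
Definition distM (M : 'M[R]_n) (z : X) (D : set X) : R :=
  inf [set normM M (d - z) | d in D].
Definition dist (z : X) (D : set X) : R :=
  inf [set enorm (d - z) | d in D].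

(* set-valued operators T : X => X, u \in T x written T x u *)
Definition monotone (T : X -> set X) : Prop :=
  forall x y u v, T x u -> T y v -> 0 <= dotp (x - y) (u - v).
Definition maximal_monotone (T : X -> set X) : Prop :=
  monotone T /\
  forall T' : X -> set X, monotone T' -> (forall x u, T x u -> T' x u) ->
    forall x u, T' x u -> T x u.

Definition zeros (T : X -> set X) : set X := [set z | T z 0].

Definition symmetric_posdef (M : 'M[R]_n) : Prop :=
  M^T = M /\ forall z : X, z != 0 -> 0 < dotp z (M *m z).

(* J_{sigma M^{-1} T}(z) = (I + sigma M^{-1} T)^{-1}(z), as a set:
   the w with z \in w + sigma M^{-1} T(w) *)
Definition resolvent (T : X -> set X) (M : 'M[R]_n) (sigma : R) (z : X)
  : set X :=
  [set w | exists u, T w u /\ z = w + sigma *: (invmx M *m u)].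

Definition IGPPAstep (T : X -> set X) (M : 'M[R]_n)
  (z : X) (sigma eta delta gamma : R) (zplus : X) : Prop :=
  exists w J, resolvent T M sigma z J /\
    normM M (w - J) <= Num.min eta (delta * normM M (w - z)) /\
    zplus = gamma *: w + (1 - gamma) *: z.

(* bounded metric subregularity (dist(0, T z) = +oo when T z is empty) *)
Definition bounded_metric_subregular (T : X -> set X) : Prop :=
  forall r : R, 0 < r -> exists kappa : R, 0 < kappa /\
    forall z : X, enorm z <= r -> forall v, T z v ->
      dist z (zeros T) <= kappa * enorm v.

End Defs.

(* Main.v *)
Require Import Defs.
From HB Require Import structures.
From mathcomp Require Import all_boot all_order all_algebra.
From mathcomp Require Import all_classical all_reals.
From mathcomp Require Import topology normedtype sequences derive.
From mathcomp Require Import ring lra.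
Import Order.TTheory GRing.Theory Num.Theory numFieldTopology.Exports numFieldNormedType.Exports.
Local Open Scope ring_scope.
Local Open Scope classical_set_scope.
Set Implicit Arguments. Unset Strict Implicit. Unset Printing Implicit Defensive.

Lemma quad_zero (R : realFieldType) (a b : R) : 0 <= a -> 0 <= b ->
  (forall t, 0 <= 2 * t * a + t ^+ 2 * b) -> a = 0.
Proof.
move=> a0 b0 H; set t := - a / (b + 1).
have ht : t * (b + 1) = - a by rewrite /t; field; rewrite gt_eqF //; lra.
have := H t; rewrite expr2 => H1.
nra.
Qed.

Lemma quad_cs (R : realFieldType) (a b c : R) : 0 <= a -> 0 <= c ->
  (forall t, 0 <= a + 2 * t * b + t ^+ 2 * c) -> b ^+ 2 <= a * c.
Proof.
move=> a0 c0 H; have [c00|cpos] := eqVneq c 0.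
  have [b00|bn0] := eqVneq b 0; first by rewrite b00 c00; nra.
  set t := - (a + 1) / (2 * b).
  have ht : 2 * t * b = - (a + 1).
    by rewrite /t; field.
  have := H t; rewrite c00 expr2; nra.
have cp : 0 < c by rewrite lt_def cpos c0.
set t := - b / c.
have ht : t * c = - b by rewrite /t -mulrA mulVf ?mulr1.
have := H t; rewrite expr2 => H1; nra.
Qed.

Section Aux.
Variables (R : realType) (n : nat).
Local Notation X := 'cV[R]_n.

Lemma dotpE (x y : X) : dotp x y = \sum_i x i 0 * y i 0.
Proof. by rewrite /dotp !mxE; apply: eq_bigr => i _; rewrite mxE. Qed.

Lemma dotpC (x y : X) : dotp x y = dotp y x.
Proof. by rewrite !dotpE; apply: eq_bigr => i _; rewrite mulrC. Qed.

Lemma dotpDl (x y z : X) : dotp (x + y) z = dotp x z + dotp y z.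
Proof. by rewrite !dotpE -big_split; apply: eq_bigr => i _; rewrite mxE mulrDl. Qed.

Lemma dotpZl (c : R) (x z : X) : dotp (c *: x) z = c * dotp x z.
Proof. by rewrite !dotpE mulr_sumr; apply: eq_bigr => i _; rewrite mxE mulrA. Qed.

Lemma dotpNl (x z : X) : dotp (- x) z = - dotp x z.
Proof. by rewrite -scaleN1r dotpZl mulN1r. Qed.

Lemma dotpDr (x y z : X) : dotp z (x + y) = dotp z x + dotp z y.
Proof. by rewrite dotpC dotpDl !(dotpC z). Qed.
Lemma dotpZr (c : R) (x z : X) : dotp z (c *: x) = c * dotp z x.
Proof. by rewrite dotpC dotpZl dotpC. Qed.
Lemma dotpNr (x z : X) : dotp z (- x) = - dotp z x.
Proof. by rewrite dotpC dotpNl dotpC. Qed.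
Lemma dotpBl (x y z : X) : dotp (x - y) z = dotp x z - dotp y z.
Proof. by rewrite dotpDl dotpNl. Qed.
Lemma dotpBr (x y z : X) : dotp z (x - y) = dotp z x - dotp z y.
Proof. by rewrite dotpDr dotpNr. Qed.

Lemma dotp0l (y : X) : dotp 0 y = 0.
Proof. by rewrite dotpE big1 // => i _; rewrite mxE mul0r. Qed.
Lemma dotp0r (y : X) : dotp y 0 = 0.
Proof. by rewrite dotpC dotp0l. Qed.

Lemma dotp_ge0 (x : X) : 0 <= dotp x x.
Proof. by rewrite dotpE; apply: sumr_ge0 => i _; rewrite -expr2 sqr_ge0. Qed.

Lemma dotp_gt0 (x : X) : x != 0 -> 0 < dotp x x.
Proof.
move=> x0; rewrite lt_def dotp_ge0 andbT; apply: contraNN x0.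
rewrite dotpE => /eqP /psumr_eq0P H.
have {}H : forall i, true -> x i 0 * x i 0 = 0.
  by apply: H => i _; rewrite -expr2 sqr_ge0.
apply/eqP/matrixP => i j.
rewrite (ord1 j) mxE; have := H i isT; rewrite -expr2 => /eqP.
by rewrite sqrf_eq0 => /eqP.
Qed.

Lemma dotp_trmx (A : 'M[R]_n) (x y : X) : dotp x (A *m y) = dotp (A^T *m x) y.
Proof. by rewrite /dotp trmx_mul trmxK mulmxA. Qed.


Lemma cont_sum (I : finType) (F : I -> 'rV[R]_n -> R) :
  (forall i, continuous (F i)) -> continuous (fun v => \sum_i F i v).
Proof.
move=> Fc.
suff H : forall s : seq I, continuous (fun v => \sum_(i <- s) F i v) by exact: H.
elim=> [|i s IH].
  by under eq_fun do rewrite big_nil; exact: cst_continuous.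
under eq_fun do rewrite big_cons.
by move=> v; apply: continuousD; [exact: Fc | exact: IH].
Qed.

Lemma qexp (B : 'M[R]_n) (x y : X) (t : R) : B^T = B ->
  dotp (x + t *: y) (B *m (x + t *: y)) =
  dotp x (B *m x) + 2 * t * dotp y (B *m x) + t ^+ 2 * dotp y (B *m y).
Proof.
move=> sB.
have sy : dotp x (B *m y) = dotp y (B *m x) by rewrite dotp_trmx sB dotpC.
rewrite mulmxDr -scalemxAr dotpDl !dotpDr !dotpZl !dotpZr sy; ring.
Qed.

Lemma rayleigh_min (A : 'M[R]_n) : (0 < n)%N -> A^T = A ->
  exists m, eigenvalue A m /\ forall x : X, m * dotp x x <= dotp x (A *m x).
Proof.
move=> n0 sA.
pose g (v : 'rV[R]_n) := dotp v^T (A *m v^T).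
pose h (v : 'rV[R]_n) := dotp v^T v^T.
pose S := h @^-1` [set (1 : R)].
have gE : g = fun v => \sum_i (v 0 i * \sum_j (A i j * v 0 j)).
  apply: funext => v; rewrite /g dotpE; apply: eq_bigr => i _.
  by rewrite !mxE; congr (_ * _); apply: eq_bigr => j _; rewrite !mxE.
have hE : h = fun v => \sum_i (v 0 i * v 0 i).
  by apply: funext => v; rewrite /h dotpE; apply: eq_bigr => i _; rewrite !mxE.
have gc : continuous g.
  rewrite gE; apply: cont_sum => i v; apply: continuousM; first exact: coord_continuous.
  apply: cont_sum => j w; apply: continuousM; first exact: cst_continuous.
  exact: coord_continuous.
have hc : continuous h.
  rewrite hE; apply: cont_sum => i v; apply: continuousM; exact: coord_continuous.
have Scl : closed S.
  by apply: preimage_closed; [move=> x _; exact: hc | exact: closed_eq].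
have Sb : bounded_set S.
  exists 1; split; first by rewrite realE ler01.
  move=> M M1 v /= Sv; apply: le_trans (ltW M1).
  rewrite [X in X <= _]/Num.norm /= mx_normrE; apply: bigmax_le => // -[i j] _ /=.
  rewrite (ord1 i).
  have : v 0 j ^+ 2 <= 1.
    move: Sv; rewrite /S /preimage /= hE => <-.
    rewrite (bigD1 j) //= expr2 lerDl; apply: sumr_ge0 => k _; rewrite -expr2; exact: sqr_ge0.
  rewrite ler_norml => H; apply/andP; split; nra.
have Scp : compact S by apply: bounded_closed_compact.
have S0 : S !=set0.
  exists (delta_mx 0 (Ordinal n0)); rewrite /S /preimage /= hE.
  rewrite (bigD1 (Ordinal n0)) //= !mxE !eqxx mulr1 big1 ?addr0 //.
  by move=> i /negbTE ni; rewrite !mxE ni andbF mulr0.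
have [c cS cmin] := compact_EVT_min S0 Scp (continuous_subspaceT gc).
set m := g c.
have hc1 : h c = 1 by move: cS; rewrite inE.
have low : forall x : X, m * dotp x x <= dotp x (A *m x).
  move=> x; have [->|x0] := eqVneq x 0.
    by rewrite mulmx0 !dotp0l mulr0.
  have xp := dotp_gt0 x0; set s := dotp x x in xp *.
  pose v := ((Num.sqrt s)^-1 *: x)^T.
  have sp : 0 < Num.sqrt s by rewrite sqrtr_gt0.
  have vS : v \in S.
    rewrite inE /S /preimage /= /h /v trmxK dotpZl dotpZr -/s mulrA -expr2.
    by rewrite exprVn sqr_sqrtr ?(ltW xp) // mulVf // gt_eqF.
  have := cmin v vS; rewrite /g /v trmxK -scalemxAr dotpZl dotpZr mulrA -expr2.
  rewrite exprVn sqr_sqrtr ?(ltW xp) // -/m => H.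
  have := ler_wpM2l (ltW xp) H; rewrite mulrA mulfV ?gt_eqF // mul1r.
  by rewrite mulrC.
exists m; split => //.
pose B := A - m%:M.
have sB : B^T = B by rewrite /B linearB /= sA tr_scalar_mx.
have qB : forall x : X, dotp x (B *m x) = dotp x (A *m x) - m * dotp x x.
  by move=> x; rewrite /B mulmxBl mul_scalar_mx dotpBr dotpZr.
have qBge : forall x : X, 0 <= dotp x (B *m x) by move=> x; rewrite qB subr_ge0.
have qBc : dotp c^T (B *m c^T) = 0.
  by rewrite qB -/(h c) hc1 mulr1 /m /g subrr.
set y := B *m c^T.
have y0 : dotp y y = 0.
  apply: (@quad_zero _ _ (dotp y (B *m y))); [exact: dotp_ge0 | exact: qBge|].
  move=> t; have := qBge (c^T + t *: y); rewrite qexp // qBc add0r.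
  by rewrite dotpC.
have yz : y = 0.
  by apply/eqP; apply: contraT => /dotp_gt0; rewrite y0 ltxx.
apply/eigenvalueP; exists c.
  have : (B *m c^T)^T = 0 by rewrite -/y yz trmx0.
  rewrite trmx_mul trmxK sB /B mulmxBr mul_mx_scalar => /eqP.
  by rewrite subr_eq0 => /eqP.
apply: contraT => /negPn /eqP c0; move: hc1; rewrite /h c0 trmx0.
by rewrite /dotp mulmx0 mxE => /eqP; rewrite eq_sym oner_eq0.
Qed.

End Aux.


Section Norms.
Variables (R : realType) (n : nat) (A : 'M[R]_n).
Hypothesis sA : A^T = A.
Hypothesis pA : forall x, 0 <= dotp x (A *m x).
Local Notation X := 'cV[R]_n.
Local Notation N := (normM A).

Lemma normM_ge0 x : 0 <= N x.
Proof. exact: sqrtr_ge0. Qed.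

Lemma normM_sqr x : N x ^+ 2 = dotp x (A *m x).
Proof. by rewrite /normM sqr_sqrtr. Qed.

Lemma bf_sym (x y : X) : dotp x (A *m y) = dotp y (A *m x).
Proof. by rewrite dotp_trmx sA dotpC. Qed.

Lemma normM_cs (x y : X) : dotp x (A *m y) <= N x * N y.
Proof.
have H : (dotp x (A *m y)) ^+ 2 <= dotp x (A *m x) * dotp y (A *m y).
  rewrite bf_sym; apply: quad_cs => // t; rewrite -qexp //; exact: pA.
apply: le_trans (ler_norm _) _.
rewrite -sqrtr_sqr /normM -sqrtrM //.
by rewrite ler_sqrt // mulr_ge0.
Qed.

Lemma normMD (x y : X) : N (x + y) <= N x + N y.
Proof.
have := qexp x y 1 sA; rewrite scale1r => E.
rewrite -(ger0_norm (addr_ge0 (normM_ge0 x) (normM_ge0 y))) -sqrtr_sqr /normM.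
rewrite ler_sqrt ?sqr_ge0 // E -/(N x) -/(N y).
have := normM_cs y x; rewrite -!normM_sqr => H.
have := normM_ge0 x; have := normM_ge0 y; nra.
Qed.

Lemma normMZ (c : R) (x : X) : N (c *: x) = `|c| * N x.
Proof.
by rewrite /normM -scalemxAr dotpZl dotpZr mulrA -expr2 sqrtrM ?sqr_ge0 // sqrtr_sqr.
Qed.

Lemma normMN (x : X) : N (- x) = N x.
Proof. by rewrite -scaleN1r normMZ normrN1 mul1r. Qed.

Lemma normMB (x y : X) : N (x - y) = N (y - x).
Proof. by rewrite -normMN opprB. Qed.

End Norms.


Lemma sqr_le_ge0 (R : realFieldType) (a b : R) : 0 <= b -> a ^+ 2 <= b ^+ 2 -> a <= b.
Proof. move=> b0 h; rewrite !expr2 in h; nra. Qed.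

Lemma enormE (R : realType) n (x : 'cV[R]_n) : enorm x = normM 1 x.
Proof. by rewrite /enorm /normM mul1mx. Qed.

Section Main.
Variables (R : realType) (n : nat) (M : 'M[R]_n) (lmin : R).
Local Notation X := 'cV[R]_n.
Hypothesis sM : M^T = M.
Hypothesis pdM : forall z : X, z != 0 -> 0 < dotp z (M *m z).
Hypothesis e1 : eigenvalue M 1.
Hypothesis e1max : forall a, eigenvalue M a -> a <= 1.
Hypothesis elmin : eigenvalue M lmin.
Hypothesis elminmin : forall a, eigenvalue M a -> lmin <= a.

Lemma n_gt0 : (0 < n)%N.
Proof.
move: e1 => /eigenvalueP [v _ v0]; apply: contraT; rewrite -leqNgt leqn0 => /eqP n0.
move: v0; have -> : v = 0 by apply/matrixP => i j; have := ltn_ord j; rewrite {2}n0.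
by rewrite eqxx.
Qed.

Lemma pM (x : X) : 0 <= dotp x (M *m x).
Proof.
have [->|x0] := eqVneq x 0; first by rewrite mulmx0 dotp0l.
exact: ltW (pdM x0).
Qed.

Lemma qup (x : X) : dotp x (M *m x) <= dotp x x.
Proof.
have sN : (- M)^T = - M by rewrite linearN /= sM.
have [m [em H]] := rayleigh_min n_gt0 sN.
have em' : eigenvalue M (- m).
  move/eigenvalueP: em => [v vM v0]; apply/eigenvalueP; exists v => //.
  by rewrite scaleNr -vM mulmxN opprK.
have hm := e1max em'.
have := H x; rewrite mulNmx dotpNr => h; have := dotp_ge0 x; nra.
Qed.

Lemma qlow (x : X) : lmin * dotp x x <= dotp x (M *m x).
Proof.
have [m [em H]] := rayleigh_min n_gt0 sM.
have := elminmin em => hm; have := H x; have := dotp_ge0 x; nra.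
Qed.

Lemma lmin_le1 : lmin <= 1.
Proof. exact: elminmin e1. Qed.

Lemma lmin_gt0 : 0 < lmin.
Proof.
move/eigenvalueP: elmin => [v vM v0].
have x0 : v^T != 0 by apply: contraNN v0 => /eqP h; rewrite -(trmxK v) h trmx0.
have := pdM x0; have -> : M *m v^T = lmin *: v^T.
  by rewrite -{1}sM -trmx_mul vM linearZ.
by rewrite dotpZr pmulr_lgt0 // dotp_gt0.
Qed.

Lemma normM_le_enorm (x : X) : normM M x <= enorm x.
Proof. by rewrite /normM /enorm ler_sqrt ?dotp_ge0 // qup. Qed.

Lemma enorm_le_normM (x : X) : enorm x <= lmin^-1 * normM M x.
Proof.
have l0 := lmin_gt0; have l1 := lmin_le1.
apply: sqr_le_ge0; first by apply: mulr_ge0; [rewrite invr_ge0 ltW | exact: normM_ge0].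
rewrite exprMn /enorm sqr_sqrtr ?dotp_ge0 // normM_sqr; last exact: pM.
have := qlow x; have := pM x; have := dotp_ge0 x.
set a := dotp x x; set q := dotp x (M *m x) => a0 q0 h.
have il : 0 < lmin^-1 by rewrite invr_gt0.
have ll : lmin * lmin^-1 = 1 by rewrite mulfV // gt_eqF.
set i := lmin^-1 in il ll *.
have i1 : 1 <= i by nra.
have h1 : a <= i * q by have := ler_wpM2l (ltW il) h; rewrite mulrA (mulrC i) ll mul1r.
rewrite expr2; nra.
Qed.

Lemma enormM_le (x : X) : enorm (M *m x) <= normM M x.
Proof.
have h : dotp (M *m x) (M *m x) <= normM M x * enorm (M *m x).
  rewrite -{1}sM -dotp_trmx.
  apply: le_trans (normM_cs sM pM _ _) _.
  by apply: ler_wpM2l; [exact: normM_ge0 | exact: normM_le_enorm].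
have e0 : 0 <= enorm (M *m x) by exact: sqrtr_ge0.
have n0 := normM_ge0 M x.
move: h; rewrite -(sqr_sqrtr (dotp_ge0 (M *m x))) -/(enorm _) => h.
rewrite expr2 in h; nra.
Qed.


Lemma Munit : M \in unitmx.
Proof.
rewrite unitmxE unitfE; apply/negP => /det0P [v v0 vM].
have x0 : v^T != 0 by apply: contraNN v0 => /eqP h; rewrite -(trmxK v) h trmx0.
have := pdM x0; have -> : M *m v^T = 0 by rewrite -{1}sM -trmx_mul vM trmx0.
by rewrite dotp0r ltxx.
Qed.

Lemma res_eq (T : X -> set X) (s : R) (z J : X) : resolvent T M s z J ->
  exists u, T J u /\ M *m (z - J) = s *: u.
Proof.
move=> [u [TJ ->]]; exists u; split => //.
by rewrite addrAC subrr add0r -scalemxAr mulmxA mulmxV ?Munit // mul1mx.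
Qed.

Lemma fne (T : X -> set X) (s : R) (z J u w : X) : monotone T -> T J u ->
  M *m (z - J) = s *: u -> 0 <= s -> T w 0 ->
  0 <= dotp (J - w) (M *m (z - J)).
Proof.
move=> mon TJ E s0 Tw; rewrite E dotpZr; apply: mulr_ge0 => //.
by have := mon _ _ _ _ TJ Tw; rewrite subr0.
Qed.

Lemma F1 (z J w : X) : 0 <= dotp (J - w) (M *m (z - J)) ->
  normM M (z - J) ^+ 2 + normM M (J - w) ^+ 2 <= normM M (z - w) ^+ 2.
Proof.
move=> h; rewrite !(normM_sqr pM).
have -> : z - w = (z - J) + 1 *: (J - w) by rewrite scale1r addrA subrK.
rewrite qexp // expr1n mul1r mulr1; have := h; lra.
Qed.

Lemma F2a (a b : X) (g : R) : 0 <= dotp b (M *m (a - b)) -> 0 <= g <= 2 ->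
  normM M (g *: b + (1 - g) *: a) <= normM M a.
Proof.
move=> h /andP[g0 g2].
apply: sqr_le_ge0; first exact: normM_ge0.
rewrite !(normM_sqr pM) addrC qexp // -!scalemxAr !dotpZl !dotpZr.
move: h; rewrite mulmxBr !dotpBr.
have hab := bf_sym sM a b.
have q1 := pM (a - b); move: q1; rewrite mulmxBr !dotpBl !dotpBr hab.
set qa := dotp a (M *m a); set qb := dotp b (M *m b); set p := dotp b (M *m a).
move=> q1 h.
have h1 : 0 <= g ^+ 2 * (p - qb) by apply: mulr_ge0; [exact: sqr_ge0 | lra].
have h2 : 0 <= g * (2 - g) * (qa - p) by apply: mulr_ge0; [apply: mulr_ge0; lra | lra].
have E : (1 - g) * ((1 - g) * qa) + 2 * g * ((1 - g) * p) + g ^+ 2 * qb - qa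
   = - (g ^+ 2 * (p - qb)) - g * (2 - g) * (qa - p) by ring.
rewrite -subr_le0 E; lra.
Qed.

Lemma F2 (z J w : X) (g : R) : 0 <= dotp (J - w) (M *m (z - J)) -> 0 <= g <= 2 ->
  normM M (g *: (J - w) + (1 - g) *: (z - w)) <= normM M (z - w).
Proof.
move=> h hg; apply: F2a hg.
have -> : z - w - (J - w) = z - J by rewrite opprB addrA subrK.
exact: h.
Qed.

Lemma fejer (T : X -> set X) (z z' w : X) (s e d g : R) : monotone T ->
  IGPPAstep T M z s e d g z' -> 0 <= s -> 0 < g < 2 -> T w 0 ->
  normM M (z' - w) <= normM M (z - w) + g * e.
Proof.
move=> mon [v [J [res [hmin ->]]]] s0 /andP[g0 g2] Tw.
have [u [TJ E]] := res_eq res.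
have hf := fne mon TJ E s0 Tw.
have -> : g *: v + (1 - g) *: z - w
    = (g *: (J - w) + (1 - g) *: (z - w)) + g *: (v - J).
  by apply/matrixP => i j; rewrite !mxE; ring.
apply: le_trans (normMD sM pM _ _) _; apply: lerD.
  by apply: F2 => //; rewrite ltW // ltW.
rewrite normMZ (ger0_norm (ltW g0)); apply: ler_wpM2l; first exact: ltW.
by move: hmin; rewrite le_min => /andP[].
Qed.

End Main.

Unset Implicit Arguments. Set Strict Implicit. Set Printing Implicit Defensive.

Theorem proposition1 (R : realType) (n : nat)
  (T : 'cV[R]_n -> set 'cV[R]_n) (M : 'M[R]_n) (lmin : R)
  (z : nat -> 'cV[R]_n) (sigma eta : nat -> R) (gamma delta : R)
  (zbar0 : 'cV[R]_n) (r kappa : R) :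
  maximal_monotone T ->
  zeros T !=set0 ->
  symmetric_posdef M ->
  (* lambda_max(M) = 1 *)
  eigenvalue M 1 -> (forall a, eigenvalue M a -> a <= 1) ->
  (* lmin = lambda_min(M) *)
  eigenvalue M lmin -> (forall a, eigenvalue M a -> lmin <= a) ->
  0 < gamma < 2 ->
  0 <= delta < 2^-1 ->
  (forall k, 0 <= sigma k) -> (forall k, 0 <= eta k) ->
  cvgn (series eta) ->
  0 < inf (range sigma) ->
  (forall k, IGPPAstep T M (z k) (sigma k) (eta k) delta gamma (z k.+1)) ->
  bounded_metric_subregular T ->
  zeros T zbar0 ->
  (forall d, zeros T d -> normM M (zbar0 - z 0%N) <= normM M (d - z 0%N)) ->
  enorm zbar0 + lmin^-1 * (distM M (z 0%N) (zeros T)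
                             + gamma * limn (series eta)) <= r ->
  0 < kappa ->
  (forall x, enorm x <= r -> forall v, T x v ->
     dist x (zeros T) <= kappa * enorm v) ->
  forall k : nat,
    (1 - delta) / gamma * normM M (z k.+1 - z k) <= distM M (z k) (zeros T)
    /\ distM M (z k) (zeros T) <=
       (1 + delta) / (gamma * (1 - Num.sqrt (kappa ^+ 2 / (sigma k ^+ 2 + kappa ^+ 2))))
         * normM M (z k.+1 - z k).
Proof.
move=> [mon _] Om0 [sM pdM] e1 e1max elmin elminmin gg dd sig0 eta0 ceta infpos
  step _ zb0 zbmin rbound kap0 subreg k.
have /andP[g0 g2] := gg; have /andP[d0 d2] := dd.
have pM' := pM pdM.
have nle := normM_le_enorm sM e1 e1max.
have enl := enorm_le_normM sM pdM e1 elmin elminmin.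
have eMl := enormM_le sM pdM e1 e1max.
have l0 := lmin_gt0 sM pdM elmin.
have sk : forall j, 0 < sigma j.
  move=> j; apply: lt_le_trans infpos _.
  have hl : has_lbound (range sigma) by exists 0 => _ [i _ <-]; exact: sig0.
  by apply: (ge_inf hl); exists j.
have distM_le : forall x d, zeros T d -> distM M x (zeros T) <= normM M (d - x).
  move=> x d Od; apply: ge_inf; last by exists d.
  by exists 0 => _ [d' _ <-]; exact: normM_ge0.
have distM_ge : forall x c, (forall d, zeros T d -> c <= normM M (d - x)) ->
    c <= distM M x (zeros T).
  move=> x c H; apply: lb_le_inf; last by move=> _ [d Od <-]; exact: H.
  by case: Om0 => d Od; exists (normM M (d - x)), d.
have fej : forall j, normM M (z j - zbar0) <= normM M (z 0%N - zbar0) + gamma * series eta j.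
  elim=> [|j IH]; first by rewrite seriesEnat /= big_geq // mulr0 addr0.
  apply: le_trans (fejer sM pdM mon (step j) (ltW (sk j)) gg zb0) _.
  by rewrite seriesSr mulrDr addrA lerD2r.
have ser_le : forall j, series eta j <= limn (series eta).
  apply: nondecreasing_cvgn_le => //; apply/nondecreasing_seqP => j.
  by rewrite seriesSr lerDl eta0.
have d0eq : normM M (z 0%N - zbar0) = distM M (z 0%N) (zeros T).
  apply/eqP; rewrite eq_le; apply/andP; split.
    by apply: distM_ge => d Od; rewrite normMB; exact: zbmin.
  by rewrite normMB; exact: distM_le.
have [w [J [res [hmin zk1]]]] := step k.
have [u [TJ E]] := res_eq sM pdM res.
have hf : forall d, zeros T d -> 0 <= dotp (J - d) (M *m (z k - J)).
  by move=> d Od; exact: (fne mon TJ E (ltW (sk k)) Od).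
have F1' : forall d, zeros T d -> normM M (z k - J) ^+ 2 + normM M (J - d) ^+ 2
    <= normM M (z k - d) ^+ 2 by move=> d Od; exact: F1 sM pdM _ _ _ (hf d Od).
set e := normM M (z k - J).
have e0 : 0 <= e by exact: normM_ge0.
have hJ : normM M (J - zbar0) <= normM M (z k - zbar0).
  apply: sqr_le_ge0; first exact: normM_ge0.
  have := F1' _ zb0; rewrite -/e; have := sqr_ge0 e; lra.
have s1 : (1 : 'M[R]_n)^T = 1 by exact: trmx1.
have p1 : forall x : 'cV[R]_n, 0 <= dotp x (1 *m x) by move=> x; rewrite mul1mx dotp_ge0.
have eJ : enorm J <= r.
  apply: le_trans rbound.
  have -> : J = zbar0 + (J - zbar0) by rewrite addrC subrK.
  rewrite [X in X <= _]enormE; apply: le_trans (normMD s1 p1 _ _) _.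
  rewrite -!enormE lerD2l; apply: le_trans (enl _) _.
  apply: ler_wpM2l; first by rewrite invr_ge0 ltW.
  apply: le_trans hJ _; apply: le_trans (fej k) _.
  by rewrite d0eq lerD2l; apply: ler_wpM2l; [exact: ltW | exact: ser_le].
set Dz := distM M (z k) (zeros T).
set DJ := distM M J (zeros T).
have DJ0 : 0 <= DJ by apply: distM_ge => d _; exact: normM_ge0.
have DJd : DJ <= dist J (zeros T).
  apply: lb_le_inf; first by case: Om0 => d Od; exists (enorm (d - J)), d.
  by move=> _ [d Od <-]; exact: le_trans (distM_le J d Od) (nle _).
have du := subreg J eJ u TJ.
have ue : enorm u <= (sigma k)^-1 * e.
  have -> : u = (sigma k)^-1 *: (M *m (z k - J)).
    by rewrite E scalerA mulVf ?scale1r // gt_eqF.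
  rewrite enormE normMZ -enormE ger0_norm; last by rewrite invr_ge0 ltW.
  by apply: ler_wpM2l; [rewrite invr_ge0 ltW | exact: eMl].
have DJe : DJ <= kappa * ((sigma k)^-1 * e).
  apply: le_trans DJd _; apply: le_trans du _.
  by apply: ler_wpM2l; [exact: ltW | exact: ue].
have ezD : e ^+ 2 + DJ ^+ 2 <= Dz ^+ 2.
  have H : Num.sqrt (e ^+ 2 + DJ ^+ 2) <= Dz.
    apply: distM_ge => d Od; apply: sqr_le_ge0; first exact: normM_ge0.
    rewrite sqr_sqrtr; last by rewrite addr_ge0 // sqr_ge0.
    have := F1' d Od; rewrite -/e normMB (normMB _ (z k)).
    have : DJ <= normM M (d - J) by exact: distM_le.
    rewrite (normMB _ d) => h1 h2.
    have := normM_ge0 M (J - d); nra.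
  have sq0 := sqrtr_ge0 (e ^+ 2 + DJ ^+ 2).
  rewrite -(sqr_sqrtr (_ : 0 <= e ^+ 2 + DJ ^+ 2)); last by rewrite addr_ge0 // sqr_ge0.
  rewrite !expr2; nra.
have DzeJ : Dz <= e + DJ.
  rewrite -lerBlDl; apply: distM_ge => d Od; rewrite lerBlDl.
  apply: le_trans (distM_le _ _ Od) _.
  have -> : d - z k = (J - z k) + (d - J) by apply/matrixP => i j; rewrite !mxE; ring.
  by apply: le_trans (normMD sM pM' _ _) _; rewrite normMB.
have eDz : e <= Dz.
  apply: distM_ge => d Od; apply: sqr_le_ge0; first exact: normM_ge0.
  have := F1' d Od; rewrite -/e normMB (normMB _ (z k)).
  have := sqr_ge0 (normM M (d - J)); lra.
set Nw := normM M (w - z k).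
have Nw0 : 0 <= Nw by exact: normM_ge0.
have Nstep : normM M (z k.+1 - z k) = gamma * Nw.
  have -> : z k.+1 - z k = gamma *: (w - z k).
    by rewrite zk1; apply/matrixP => i j; rewrite !mxE; ring.
  by rewrite normMZ ger0_norm ?ltW.
have hwJ : normM M (w - J) <= delta * Nw by move: hmin; rewrite le_min => /andP[].
have low : (1 - delta) * Nw <= e.
  have : Nw <= normM M (w - J) + e.
    rewrite /Nw /e (normMB _ (z k)).
    have -> : w - z k = (w - J) + (J - z k) by apply/matrixP => i j; rewrite !mxE; ring.
    exact: normMD sM pM' _ _.
  lra.
have up : e <= (1 + delta) * Nw.
  have : e <= Nw + normM M (w - J).
    rewrite /Nw /e (normMB _ w).
    have -> : z k - J = (z k - w) + (w - J) by apply/matrixP => i j; rewrite !mxE; ring.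
    exact: normMD sM pM' _ _.
  lra.
rewrite Nstep; split.
  rewrite mulrA divfK ?gt_eqF //; exact: le_trans low eDz.
set s := sigma k.
have s0 := sk k; rewrite -/s in s0 DJe.
set rho := Num.sqrt (kappa ^+ 2 / (s ^+ 2 + kappa ^+ 2)).
have den0 : 0 < s ^+ 2 + kappa ^+ 2 by rewrite addr_gt0 // exprn_gt0.
have q0 : 0 <= kappa ^+ 2 / (s ^+ 2 + kappa ^+ 2) by rewrite divr_ge0 ?sqr_ge0 ?ltW.
have r2 : rho ^+ 2 = kappa ^+ 2 / (s ^+ 2 + kappa ^+ 2) by rewrite sqr_sqrtr.
have rho0 : 0 <= rho by exact: sqrtr_ge0.
have q1 : kappa ^+ 2 / (s ^+ 2 + kappa ^+ 2) < 1.
  rewrite ltr_pdivrMr // mul1r ltrDr exprn_gt0 //.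
have rho1 : rho < 1 by rewrite -r2 in q1; nra.
have DJr : DJ <= rho * Dz.
  apply: sqr_le_ge0; first by apply: mulr_ge0 => //; exact: le_trans eDz.
  rewrite exprMn r2 mulrAC ler_pdivlMr //.
  have h1 : DJ * s <= kappa * e.
    have := ler_wpM2r (ltW s0) DJe.
    have -> : kappa * (s^-1 * e) * s = kappa * e by field; rewrite gt_eqF.
    by [].
  have h2 : (DJ * s) ^+ 2 <= (kappa * e) ^+ 2.
    by rewrite ler_sqr ?nnegrE ?mulr_ge0 // ltW.
  rewrite !exprMn in h2; nra.
have fin : (1 - rho) * Dz <= (1 + delta) * Nw by nra.
have E2 : (1 + delta) / (gamma * (1 - rho)) * (gamma * Nw) = (1 + delta) * Nw / (1 - rho).
  by field; rewrite !gt_eqF // subr_gt0.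
rewrite E2 ler_pdivlMr ?subr_gt0 // mulrC; exact: fin.
Qed.
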